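(* Let $\mathfrak{K}=(\{a,b\},R,E)$ be the $\mathsf{MS4}$-frame with $R[a]=\{a,b\}$, $R[b]=\{b\}$, $E[a]=E[b]=\{a,b\}$, and let $\mathfrak{H}=(\{a,b,c\},R,E)$ be the $\mathsf{MS4}$-frame with $R[a]=\{a,b,c\}$, $R[b]=R[c]=\{b,c\}$, $E[a]=E[b]=\{a,b\}$, $E[c]=\{c\}$. Then: (1) $\mathfrak{K}\vDash\mathsf{MGrz}$ but $\mathfrak{K}\nvDash\mathsf{LKur}$; (2) $\mathfrak{H}\vDash\mathsf{LKur}$ but $\mathfrak{H}\nvDash\mathsf{MGrz}$; (3) $\mathsf{MGrz}$ and $\mathsf{LKur}$ are incomparable (neither contains the other).
   Context: $\mathsf{MS4}$ is the smallest set of formulas in the classical bimodal language $\mathcal{L}_{\Box\forall}$ containing all classical tautologies, the $\mathsf{S4}$ axioms for $\Box$, the $\mathsf{S5}$ axioms for $\forall$, and $\Box\forall p\to\forall\Box p$, closed under modus ponens, substitution, $\Box$- and $\forall$-necessitation; $\Diamond=\neg\Box\neg$, $\exists=\neg\forall\neg$. $\mathsf{MGrz}=\mathsf{MS4}+\Box(\Box(p\to\Box p)\to p)\to p$ and $\mathsf{LKur}=\mathsf{MS4}+\Box\forall\Diamond\Box p\to\Diamond\forall p$ (smallest extensions closed under the same rules containing the extra axiom). An $\mathsf{MS4}$-frame is $(Y,R,E)$ with $R$ a quasi-order, $E$ an equivalence relation, such that $xEy$ and $yRz$ imply there is $u$ with $xRu$ and $uEz$. Formulas are evaluated with valuations assigning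 subsets of $Y$ to letters, $\Box$ interpreted via $R$ and $\forall$ via $E$; a frame validates a logic if every formula of the logic is true at every point under every valuation. $R[x]=\{y: xRy\}$. *)

(* Defs.v *)
Inductive form : Type :=
| Var : nat -> form
| Bot : form
| Imp : form -> form -> form
| Box : form -> form
| All : form -> form.

Definition Neg (a : form) : form := Imp a Bot.
Definition Dia (a : form) : form := Neg (Box (Neg a)).
Definition Ex (a : form) : form := Neg (All (Neg a)).

(* Classical tautologies: formulas true under every boolean assignment to the
   "atoms" (propositional letters and modalized subformulas). *)
Fixpoint tv (v : form -> bool) (f : form) : bool :=
  match f with
  | Var _ => v f
  | Bot => false
  | Imp a b => implb (tv v a) (tv v b)
  | Box _ => v f
  | All _ => v f
  end.

Definition tautology (f : form) : Prop := forall v, tv v f = true.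

Fixpoint subst (s : nat -> form) (f : form) : form :=
  match f with
  | Var n => s n
  | Bot => Bot
  | Imp a b => Imp (subst s a) (subst s b)
  | Box a => Box (subst s a)
  | All a => All (subst s a)
  end.

Definition p : form := Var 0.
Definition q : form := Var 1.

Inductive derivable (Ax : form -> Prop) : form -> Prop :=
| d_taut : forall f, tautology f -> derivable Ax f
| d_boxK : derivable Ax (Imp (Box (Imp p q)) (Imp (Box p) (Box q)))
| d_boxT : derivable Ax (Imp (Box p) p)
| d_box4 : derivable Ax (Imp (Box p) (Box (Box p)))
| d_allK : derivable Ax (Imp (All (Imp p q)) (Imp (All p) (All q)))
| d_allT : derivable Ax (Imp (All p) p)
| d_all4 : derivable Ax (Imp (All p) (All (All p)))
| d_all5 : derivable Ax (Imp (Ex p) (All (Ex p)))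
| d_mix : derivable Ax (Imp (Box (All p)) (All (Box p)))
| d_ax : forall f, Ax f -> derivable Ax f
| d_mp : forall a b, derivable Ax (Imp a b) -> derivable Ax a -> derivable Ax b
| d_subst : forall s f, derivable Ax f -> derivable Ax (subst s f)
| d_necBox : forall f, derivable Ax f -> derivable Ax (Box f)
| d_necAll : forall f, derivable Ax f -> derivable Ax (All f).

Definition MS4 : form -> Prop := derivable (fun _ => False).

Definition grz_ax : form := Imp (Box (Imp (Box (Imp p (Box p))) p)) p.
Definition kur_ax : form := Imp (Box (All (Dia (Box p)))) (Dia (All p)).

Definition MGrz : form -> Prop := derivable (fun f => f = grz_ax).
Definition LKur : form -> Prop := derivable (fun f => f = kur_ax).

Fixpoint sat {Y : Type} (R E : Y -> Y -> Prop) (V : nat -> Y -> Prop)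
  (f : form) (x : Y) : Prop :=
  match f with
  | Var n => V n x
  | Bot => False
  | Imp a b => sat R E V a x -> sat R E V b x
  | Box a => forall y, R x y -> sat R E V a y
  | All a => forall y, E x y -> sat R E V a y
  end.

Definition is_MS4_frame {Y : Type} (R E : Y -> Y -> Prop) : Prop :=
  (forall x, R x x) /\ (forall x y z, R x y -> R y z -> R x z) /\
  (forall x, E x x) /\ (forall x y, E x y -> E y x) /\
  (forall x y z, E x y -> E y z -> E x z) /\
  (forall x y z, E x y -> R y z -> exists u, R x u /\ E u z).

Definition frame_validates {Y : Type} (R E : Y -> Y -> Prop) (L : form -> Prop) : Prop :=
  forall f, L f -> forall (V : nat -> Y -> Prop) (x : Y), sat R E V f x.

Inductive Kpt : Type := Ka | Kb.
Definition KR (x y : Kpt) : Prop :=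
  match x, y with
  | Ka, _ => True
  | Kb, Kb => True
  | Kb, Ka => False
  end.
Definition KE (x y : Kpt) : Prop := True.

Inductive Hpt : Type := Ha | Hb | Hc.
Definition HR (x y : Hpt) : Prop :=
  match x, y with
  | Ha, _ => True
  | Hb, Ha => False
  | Hb, _ => True
  | Hc, Ha => False
  | Hc, _ => True
  end.
Definition HE (x y : Hpt) : Prop :=
  match x, y with
  | Hc, Hc => True
  | Hc, _ => False
  | _, Hc => False
  | _, _ => True
  end.

(* Main.v *)
Require Import Defs.
From Stdlib Require Import Classical ClassicalEpsilon.

Section S.
Context {Y : Type} (R E : Y -> Y -> Prop).

Lemma sat_subst (s : nat -> form) V f : forall x,
  sat R E V (subst s f) x <-> sat R E (fun n y => sat R E V (s n) y) f x.
Proof.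
  induction f; intros x; simpl; try tauto.
  - rewrite IHf1, IHf2; tauto.
  - split; intros H y Hy; apply IHf; auto.
  - split; intros H y Hy; apply IHf; auto.
Qed.

Lemma taut_sound f V x : tautology f -> sat R E V f x.
Proof.
  intros T.
  set (v := fun g => if excluded_middle_informative (sat R E V g x) then true else false).
  assert (K : forall g, tv v g = true <-> sat R E V g x).
  { induction g; simpl;
      try (unfold v; destruct excluded_middle_informative; split; intros; auto; discriminate).
    - split; intros H; [discriminate|destruct H].
    - rewrite <- IHg1, <- IHg2.
      destruct (tv v g1), (tv v g2); simpl; intuition congruence. }
  apply K, T.
Qed.

Lemma sound (Ax : form -> Prop) : is_MS4_frame R E ->
  (forall f, Ax f -> forall V x, sat R E V f x) ->
  forall f, derivable Ax f -> forall V x, sat R E V f x.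
Proof.
  intros [Rr [Rt [Er [Es [Et Mx]]]]] HA f D.
  induction D; intros V x; simpl; auto.
  - apply taut_sound; auto.
  - intros H1 y Hy z Hz. apply H1; eauto.
  - intros H1 y Hy z Hz. apply H1; eauto.
  - intros H1 z Hxz H2. apply H1. intros y Hxy. apply H2. eauto.
  - intros H1 z Hxz y Hzy. destruct (Mx _ _ _ Hxz Hzy) as [u [Hu1 Hu2]].
    exact (H1 u Hu1 y Hu2).
  - apply (IHD1 V x). apply IHD2.
  - apply sat_subst. apply IHD.
Qed.
End S.

Lemma K_frame : is_MS4_frame KR KE.
Proof.
  unfold is_MS4_frame, KE; repeat split; auto.
  - intros []; simpl; auto.
  - intros [] [] []; simpl; auto.
  - intros x y z _ _. exists x. split; auto. destruct x; simpl; auto.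
Qed.

Lemma H_frame : is_MS4_frame HR HE.
Proof.
  unfold is_MS4_frame; repeat split.
  - intros []; simpl; auto.
  - intros [] [] []; simpl; auto.
  - intros []; simpl; auto.
  - intros [] []; simpl; auto.
  - intros [] [] []; simpl; auto.
  - intros [] [] [] H1 H2; simpl in *; try contradiction;
      first [exists Ha; simpl; auto; fail | exists Hb; simpl; auto; fail | exists Hc; simpl; auto].
Qed.

Lemma K_grz V x : sat KR KE V grz_ax x.
Proof.
  simpl. intros H.
  assert (Hb : V 0 Kb).
  { apply (H Kb). destruct x; simpl; auto. intros y Hy Hp z Hz.
    destruct y, z; simpl in *; auto; contradiction. }
  destruct x; [|exact Hb].
  apply (H Ka); simpl; auto. intros y Hy Hp z Hz.
  destruct y, z; simpl in *; auto; contradiction.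
Qed.

Lemma H_kur V x : sat HR HE V kur_ax x.
Proof.
  simpl. intros H G.
  apply (H Hc) with (y := Hc); [destruct x; simpl; auto | simpl; auto |].
  intros y Hy B.
  apply (G Hc); [destruct x; simpl; auto|].
  intros z Hz. destruct z; simpl in Hz; try contradiction.
  apply B. destruct y; simpl in *; auto.
Qed.

Theorem theorem5p4 :
  (is_MS4_frame KR KE /\ is_MS4_frame HR HE) /\
  (frame_validates KR KE MGrz /\ ~ frame_validates KR KE LKur) /\
  (frame_validates HR HE LKur /\ ~ frame_validates HR HE MGrz) /\
  ((~ forall f, MGrz f -> LKur f) /\ (~ forall f, LKur f -> MGrz f)).
Proof.
  assert (KL : frame_validates KR KE MGrz).
  { intros f Hf. apply (sound KR KE (fun f => f = grz_ax) K_frame); auto.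
    intros g -> V x. apply K_grz. }
  assert (HL : frame_validates HR HE LKur).
  { intros f Hf. apply (sound HR HE (fun f => f = kur_ax) H_frame); auto.
    intros g -> V x. apply H_kur. }
  assert (KN : ~ frame_validates KR KE LKur).
  { intros F. apply (F kur_ax (d_ax _ _ eq_refl) (fun _ y => y = Kb) Ka).
    - intros y _ z _ N. apply (N Kb); [destruct z; simpl; auto|].
      intros w Hw. destruct w; simpl in *; auto; contradiction.
    - intros y _ N. discriminate (N Ka I). }
  assert (HN : ~ frame_validates HR HE MGrz).
  { intros F. assert (G := F grz_ax (d_ax _ _ eq_refl) (fun _ y => y = Hb) Hc).
    simpl in G. discriminate G.
    intros y Hy B. exfalso.
    destruct y; simpl in Hy; try contradiction;
      pose proof (B Hb I eq_refl Hc I); discriminate. }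
  split; [split; [exact K_frame|exact H_frame]|].
  split; [auto|]. split; [auto|]. split.
  - intros I. apply HN. intros f Hf. apply HL. apply I.
    exact Hf.
  - intros I. apply KN. intros f Hf. apply KL. apply I. exact Hf.
Qed.
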